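(* Let $T=T_{\lambda\Delta}$ be a non-degenerate T-graph. Embed $\mathcal H$ in the plane as follows: each white vertex $w$ is placed at the centre of mass of the triangle $\psi(w)$; each black vertex $b$ is placed at the unique vertex of $T$ lying in the interior of the segment $\psi(b)$; a white vertex $w$ and a black vertex $b$ are joined by a straight edge if and only if the segment $\psi(b)$ shares more than one point with the triangle $\psi(w)$. Then this is a proper embedding of $\mathcal H$ (the edges so drawn are exactly the edges of $\mathcal H$ and no two of them cross).
   Context: Setup. $\mathcal H$ is the hexagonal lattice with black/white bipartition, $\mathcal H^\dagger$ its dual triangular lattice, whose faces are coloured black or white according to the vertex of $\mathcal H$ they contain. A T-graph $T=T_{\lambda\Delta}=\psi(\mathcal H^\dagger)\subset\mathbb C$ is the image of $\mathcal H^\dagger$ under a map $\psi=\psi_{\lambda\Delta}$ defined on vertices of $\mathcal H^\dagger$ as the primitive of an explicit gradient flow (depending on a triangle $\Delta$ with angles $\pi p_a,\pi p_b,\pi p_c$, $p_a+p_b+p_c=1$, $p_\bullet\in(0,1)$, and a unit complex number $\lambda$) and extended affinely on edges. The following properties hold: the image of each black face of $\mathcal H^\dagger$ is a segment; the image of each white face is a triangle similar to $\Delta$ with orientation preserved; these triangles cover the plane with disjoint interiors; if two segments intersect, the intersection point is an endpoint of at least one of them. $T$ is called non-degenerate if no white triangle is degenerate to a point and every point $\psi(v)$, $v$ a vertex of $\mathcal H^\dagger$, belongs to exactly three segments, being an endpoint of two of them and in the interior of the third (this holds for Lebesgue-a.e. $\lambda$). The points $\psi(v)$ are the vertices of $T$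 (all segment endpoints are of this form), edges of $T$ are the portions of segments between consecutive vertices, faces of $T$ are the white triangles. One writes $\psi(b)$ for the segment image of the black face containing the black vertex $b$ of $\mathcal H$, and $\psi(w)$ for the triangle image of the white face containing white $w$. Each segment $\psi(b)$ contains exactly one vertex of $T$ in its interior. *)

(* Defs.v *)
(* real plane geometry, points of C = R^2 as pairs. *)
From Stdlib Require Import Reals Lra ZArith List Permutation.
Open Scope R_scope.

Definition Point : Type := (R * R)%type.

Definition padd (p q : Point) : Point := (fst p + fst q, snd p + snd q).
Definition psub (p q : Point) : Point := (fst p - fst q, snd p - snd q).
Definition pscale (t : R) (p : Point) : Point := (t * fst p, t * snd p).
Definition cmul (a p : Point) : Point :=
  (fst a * fst p - snd a * snd p, fst a * snd p + snd a * fst p).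
Definition dist2 (p q : Point) : R :=
  (fst p - fst q) * (fst p - fst q) + (snd p - snd q) * (snd p - snd q).
(* twice the signed area of (p,q,r); > 0 iff counterclockwise *)
Definition orient (p q r : Point) : R :=
  (fst q - fst p) * (snd r - snd p) - (snd q - snd p) * (fst r - fst p).

Definition hull3 (p q r : Point) (z : Point) : Prop :=
  exists a b c : R, 0 <= a /\ 0 <= b /\ 0 <= c /\ a + b + c = 1 /\
    z = padd (pscale a p) (padd (pscale b q) (pscale c r)).

Definition cseg (p q : Point) (z : Point) : Prop :=
  exists t : R, 0 <= t <= 1 /\ z = padd p (pscale t (psub q p)).

Definition openseg (q r z : Point) : Prop :=
  q <> r /\ exists t : R, 0 < t < 1 /\ z = padd q (pscale t (psub r q)).

(* extreme point of a set (for a segment: an endpoint) *)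
Definition extreme (S : Point -> Prop) (z : Point) : Prop :=
  S z /\ ~ (exists q r, S q /\ S r /\ openseg q r z).

Definition interior (S : Point -> Prop) (z : Point) : Prop :=
  exists e : R, 0 < e /\ forall u, dist2 u z < e * e -> S u.

(* ---- Lattices ----
   Vertices of the triangular lattice H^dagger : Z*Z.
   White vertex w=(x,y) of H  <-> up-triangle   {(x,y),(x+1,y),(x,y+1)}.
   Black vertex b=(x,y) of H  <-> down-triangle {(x+1,y),(x,y+1),(x+1,y+1)}.
   Two vertices of H are adjacent iff their triangles share an edge. *)
Definition ZP : Type := (Z * Z)%type.

Definition wface (w : ZP) : ZP * ZP * ZP :=
  let (x, y) := w in ((x, y), ((x + 1)%Z, y), (x, (y + 1)%Z)).
Definition bface (b : ZP) : ZP * ZP * ZP :=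
  let (x, y) := b in (((x + 1)%Z, y), (x, (y + 1)%Z), ((x + 1)%Z, (y + 1)%Z)).

Definition adjH (w b : ZP) : Prop :=
  let (x, y) := w in
  b = (x, y) \/ b = (x, (y - 1)%Z) \/ b = ((x - 1)%Z, y).

Definition img3 (psi : ZP -> Point) (f : ZP * ZP * ZP) : Point * Point * Point :=
  match f with (u, v, t) => (psi u, psi v, psi t) end.

(* psi(w) and psi(b) as subsets of the plane (psi extended affinely) *)
Definition psiW (psi : ZP -> Point) (w : ZP) : Point -> Prop :=
  match img3 psi (wface w) with (p, q, r) => hull3 p q r end.
Definition psiB (psi : ZP -> Point) (b : ZP) : Point -> Prop :=
  match img3 psi (bface b) with (p, q, r) => hull3 p q r end.

Record is_Tgraph (d0 d1 d2 : Point) (psi : ZP -> Point) : Prop := {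
  (* image of each black face is a segment: its three vertex images are collinear *)
  tg_black_segment : forall b,
    match img3 psi (bface b) with (p, q, r) => orient p q r = 0 end;
  (* image of each white face is a triangle similar to Delta, orientation preserved *)
  tg_white_similar : forall w, exists a c : Point,
    match img3 psi (wface w) with (p, q, r) =>
      Permutation (p :: q :: r :: nil)
        (padd (cmul a d0) c :: padd (cmul a d1) c :: padd (cmul a d2) c :: nil) end;
  tg_cover : forall z, exists w, psiW psi w z;
  tg_disjoint : forall w w' z, w <> w' ->
    interior (psiW psi w) z -> interior (psiW psi w') z -> False;
  tg_seg_inter : forall b b' z, b <> b' -> psiB psi b z -> psiB psi b' z ->
    extreme (psiB psi b) z \/ extreme (psiB psi b') z;
  tg_one_inner : forall b, exists v,
    psiB psi b (psi v) /\ ~ extreme (psiB psi b) (psi v) /\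
    forall v', psiB psi b (psi v') -> ~ extreme (psiB psi b) (psi v') ->
      psi v' = psi v
}.

Record is_nondegenerate (psi : ZP -> Point) : Prop := {
  nd_white : forall w,
    match img3 psi (wface w) with (p, q, r) => ~ (p = q /\ q = r) end;
  nd_vertex : forall v, exists b1 b2 b3,
    b1 <> b2 /\ b1 <> b3 /\ b2 <> b3 /\
    (forall b, psiB psi b (psi v) <-> (b = b1 \/ b = b2 \/ b = b3)) /\
    extreme (psiB psi b1) (psi v) /\ extreme (psiB psi b2) (psi v) /\
    ~ extreme (psiB psi b3) (psi v)
}.

Definition centroid (t : Point * Point * Point) : Point :=
  match t with (p, q, r) =>
    ((fst p + fst q + fst r) / 3, (snd p + snd q + snd r) / 3) end.

Definition posW (psi : ZP -> Point) (w : ZP) : Point := centroid (img3 psi (wface w)).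

Definition black_pos_ok (psi : ZP -> Point) (pb : ZP -> Point) : Prop :=
  forall b, (exists v, pb b = psi v) /\ psiB psi b (pb b) /\
            ~ extreme (psiB psi b) (pb b).

Definition drawn_edge (psi : ZP -> Point) (w b : ZP) : Prop :=
  exists z1 z2, z1 <> z2 /\ psiW psi w z1 /\ psiB psi b z1 /\
                psiW psi w z2 /\ psiB psi b z2.

(* vertices of H: inl = white, inr = black *)
Definition posH (psi : ZP -> Point) (pb : ZP -> Point) (v : ZP + ZP) : Point :=
  match v with inl w => posW psi w | inr b => pb b end.

Definition proper_embedding (psi : ZP -> Point) (pb : ZP -> Point) : Prop :=
  (forall v v' : ZP + ZP, posH psi pb v = posH psi pb v' -> v = v') /\
  (forall w b w' b' z, adjH w b -> adjH w' b' -> (w, b) <> (w', b') ->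
     cseg (posW psi w) (pb b) z -> cseg (posW psi w') (pb b') z ->
     (w = w' /\ z = posW psi w) \/ (b = b' /\ z = pb b)).

(* Main.v *)
Require Import Defs.
From Stdlib Require Import Reals ZArith List.
Open Scope R_scope.
From Stdlib Require Import Lra Lia Permutation.
Require Import Defs.
Import ListNotations.


Ltac pts := repeat match goal with p : Point |- _ => destruct p end;
  unfold orient, padd, pscale, psub, dist2 in *; simpl in *.

Lemma pair_eq (a b c d : R) : a = c -> b = d -> (a, b) = (c, d).
Proof. intros; subst; auto. Qed.

Lemma or_cyc (p q r : Point) : orient p q r = orient q r p.
Proof. pts; ring. Qed.
Lemma or_swap (p q r : Point) : orient q p r = - orient p q r.
Proof. pts; ring. Qed.
Lemma or_swap23 (p q r : Point) : orient p r q = - orient p q r.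
Proof. pts; ring. Qed.

Definition seg (p r z : Point) : Prop := exists t, 0 <= t <= 1 /\ z = padd p (pscale t (psub r p)).

Lemma hull_iff (p q r z : Point) : orient p q r <> 0 ->
  (hull3 p q r z <-> 0 <= orient z q r * orient p q r /\ 0 <= orient p z r * orient p q r
     /\ 0 <= orient p q z * orient p q r).
Proof.
  intro HD. split.
  - intros [a [b [c [Ha [Hb [Hc [Hs Hz]]]]]]]. subst z.
    assert (E1: orient (padd (pscale a p) (padd (pscale b q) (pscale c r))) q r = a * orient p q r)
      by (replace c with (1 - a - b) by lra; pts; ring).
    assert (E2: orient p (padd (pscale a p) (padd (pscale b q) (pscale c r))) r = b * orient p q r)
      by (replace c with (1 - a - b) by lra; pts; ring).
    assert (E3: orient p q (padd (pscale a p) (padd (pscale b q) (pscale c r))) = c * orient p q r)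
      by (replace a with (1 - b - c) by lra; pts; ring).
    rewrite E1, E2, E3. set (D := orient p q r) in *.
    assert (0 <= D * D) by nra. repeat split; nra.
  - intros [H1 [H2 H3]]. set (D := orient p q r) in *.
    exists (orient z q r / D), (orient p z r / D), (orient p q z / D).
    assert (0 < D * D) by (destruct (Rtotal_order D 0) as [h|[h|h]]; [nra|contradiction|nra]).
    assert (forall x, 0 <= x * D -> 0 <= x / D).
    { intros x hx. replace (x / D) with ((x * D) / (D * D)) by (field; auto).
      unfold Rdiv; apply Rmult_le_pos; [lra| apply Rlt_le, Rinv_0_lt_compat; lra]. }
    repeat split; auto.
    + replace (orient z q r / D + orient p z r / D + orient p q z / D)
        with ((orient z q r + orient p z r + orient p q z) / D) by (field; auto).
      replace (orient z q r + orient p z r + orient p q z) with D by (unfold D; pts; ring).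
      field; auto.
    + unfold D in *. pts. apply pair_eq; field; exact HD.
Qed.

Lemma sq_lt (a e : R) : 0 < e -> a * a < e * e -> -e < a < e.
Proof. intros; split; nra. Qed.

Lemma cont (q r z : Point) (eps : R) : 0 < eps -> exists e, 0 < e /\
  forall u, dist2 u z < e * e -> Rabs (orient u q r - orient z q r) < eps.
Proof.
  intro He. destruct q as [q1 q2], r as [r1 r2], z as [z1 z2].
  set (K := Rabs (r2 - q2) + Rabs (r1 - q1) + 1).
  assert (HK : 1 <= K) by (unfold K; pose proof (Rabs_pos (r2-q2)); pose proof (Rabs_pos (r1-q1)); lra).
  exists (eps / K). split. { apply Rdiv_lt_0_compat; lra. }
  intros [u1 u2] Hu. unfold dist2 in Hu; simpl in Hu.
  assert (0 < eps / K) by (apply Rdiv_lt_0_compat; lra).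
  pose proof (Rle_0_sqr (u1 - z1)); pose proof (Rle_0_sqr (u2 - z2)); unfold Rsqr in *.
  assert (h1 : (u1 - z1) * (u1 - z1) < eps / K * (eps / K)) by lra.
  assert (h2 : (u2 - z2) * (u2 - z2) < eps / K * (eps / K)) by lra.
  apply sq_lt in h1; auto. apply sq_lt in h2; auto.
  replace (orient (u1, u2) (q1, q2) (r1, r2) - orient (z1, z2) (q1, q2) (r1, r2))
    with (- (u1 - z1) * (r2 - q2) + (u2 - z2) * (r1 - q1)) by (unfold orient; simpl; ring).
  eapply Rle_lt_trans. apply Rabs_triang.
  rewrite !Rabs_mult, Rabs_Ropp.
  assert (Rabs (u1 - z1) < eps / K) by (apply Rabs_def1; lra).
  assert (Rabs (u2 - z2) < eps / K) by (apply Rabs_def1; lra).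
  pose proof (Rabs_pos (r2-q2)); pose proof (Rabs_pos (r1-q1)).
  pose proof (Rabs_pos (u1-z1)); pose proof (Rabs_pos (u2-z2)).
  assert (eps / K * K = eps) by (field; lra).
  apply Rle_lt_trans with (eps / K * Rabs (r2 - q2) + eps / K * Rabs (r1 - q1)).
  - apply Rplus_le_compat; apply Rmult_le_compat_r; lra.
  - unfold K in *. nra.
Qed.

Lemma same_sign (a b D : R) : 0 < a * D -> Rabs (b - a) < Rabs a -> 0 < b * D.
Proof.
  intros H1 H2. destruct (Rle_dec 0 a).
  - rewrite (Rabs_right a) in H2 by lra. apply Rabs_def2 in H2. nra.
  - rewrite (Rabs_left a) in H2 by lra. apply Rabs_def2 in H2. nra.
Qed.

Lemma min3_pos (a b c : R) : 0 < a -> 0 < b -> 0 < c ->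
  exists e, 0 < e /\ e <= a /\ e <= b /\ e <= c.
Proof.
  intros. exists (Rmin a (Rmin b c)). repeat split.
  - repeat apply Rmin_pos; auto.
  - apply Rmin_l.
  - eapply Rle_trans; [apply Rmin_r|apply Rmin_l].
  - eapply Rle_trans; [apply Rmin_r|apply Rmin_r].
Qed.

Lemma sq_mono (e a d : R) : 0 < e -> e <= a -> d < e * e -> d < a * a.
Proof. intros; nra. Qed.

Lemma INT (p q r z : Point) : orient p q r <> 0 ->
  0 < orient z q r * orient p q r -> 0 < orient p z r * orient p q r ->
  0 < orient p q z * orient p q r -> interior (hull3 p q r) z.
Proof.
  intros HD H1 H2 H3.
  assert (Pa: forall x D, 0 < x * D -> 0 < Rabs x).
  { intros x D h. apply Rabs_pos_lt. intro; subst; lra. }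
  destruct (cont q r z (Rabs (orient z q r)) (Pa _ _ H1)) as [e1 [He1 C1]].
  assert (H2' : 0 < orient z r p * orient p q r) by (rewrite <- or_cyc; exact H2).
  assert (H3' : 0 < orient z p q * orient p q r) by (rewrite <- or_cyc, <- or_cyc; exact H3).
  destruct (cont r p z (Rabs (orient z r p)) (Pa _ _ H2')) as [e2 [He2 C2]].
  destruct (cont p q z (Rabs (orient z p q)) (Pa _ _ H3')) as [e3 [He3 C3]].
  destruct (min3_pos e1 e2 e3) as [e [He [E1 [E2 E3]]]]; auto.
  exists e; split; auto. intros u Hu. apply hull_iff; auto.
  repeat split; apply Rlt_le.
  - eapply same_sign; [exact H1|]. apply C1. eapply sq_mono; eauto.
  - rewrite or_cyc. eapply same_sign; [exact H2'|].
    apply C2. eapply sq_mono; eauto.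
  - rewrite or_cyc, or_cyc. eapply same_sign; [exact H3'|].
    apply C3. eapply sq_mono; eauto.
Qed.

Lemma hull_sw12 (p q r z : Point) : hull3 p q r z -> hull3 q p r z.
Proof.
  intros [a [b [c [? [? [? [? Hz]]]]]]]. exists b, a, c. repeat split; try lra.
  subst z. pts. apply pair_eq; ring.
Qed.
Lemma hull_sw23 (p q r z : Point) : hull3 p q r z -> hull3 p r q z.
Proof.
  intros [a [b [c [? [? [? [? Hz]]]]]]]. exists a, c, b. repeat split; try lra.
  subst z. pts. apply pair_eq; ring.
Qed.

Lemma interior_ext (S S' : Point -> Prop) z : (forall u, S u -> S' u) -> interior S z -> interior S' z.
Proof. intros H [e [He Hb]]. exists e; split; auto. Qed.

Lemma interior_in (S : Point -> Prop) z : interior S z -> S z.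
Proof. intros [e [He Hb]]. apply Hb. destruct z; unfold dist2; simpl. nra. Qed.

Lemma INTPOS1 (p q r z : Point) : orient p q r <> 0 -> interior (hull3 p q r) z ->
  0 < orient z q r * orient p q r.
Proof.
  intros HD HI. pose proof (interior_in _ _ HI) as Hz.
  apply hull_iff in Hz; auto. destruct Hz as [H1 _].
  destruct (Rle_lt_or_eq_dec _ _ H1) as [h|h]; auto. exfalso.
  assert (Hz0 : orient z q r = 0).
  { symmetry in h. apply Rmult_integral in h. destruct h; auto. contradiction. }
  destruct HI as [e [He Hb]].
  set (D := orient p q r) in *.
  destruct q as [q1 q2], r as [r1 r2], z as [z1 z2].
  set (N := (r2 - q2) * (r2 - q2) + (r1 - q1) * (r1 - q1)).
  assert (HN : 0 < N).
  { unfold N. destruct (Req_dec r1 q1); destruct (Req_dec r2 q2).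
    - exfalso. apply HD. unfold D; subst. destruct p; unfold orient; simpl. ring.
    - assert (0 < (r2 - q2) * (r2 - q2)) by (apply Rsqr_pos_lt; lra). nra.
    - assert (0 < (r1 - q1) * (r1 - q1)) by (apply Rsqr_pos_lt; lra). nra.
    - assert (0 < (r1 - q1) * (r1 - q1)) by (apply Rsqr_pos_lt; lra). nra. }
  assert (HD2 : 0 < D * D) by (destruct (Rtotal_order D 0) as [hh|[hh|hh]]; [nra|contradiction|nra]).
  set (X := D * D * N).
  assert (HX : 0 < X) by (unfold X; nra).
  set (ep := e / (X + 1)).
  assert (Hep : 0 < ep) by (unfold ep; apply Rdiv_lt_0_compat; lra).
  set (u := (z1 + ep * D * (r2 - q2), z2 - ep * D * (r1 - q1))).
  assert (Hu : hull3 p (q1, q2) (r1, r2) u).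
  { apply Hb. unfold u, dist2; simpl.
    replace ((z1 + ep * D * (r2 - q2) - z1) * (z1 + ep * D * (r2 - q2) - z1) +
      (z2 - ep * D * (r1 - q1) - z2) * (z2 - ep * D * (r1 - q1) - z2)) with (ep * ep * X)
      by (unfold X, N; ring).
    assert (HH : ep * (X + 1) = e) by (unfold ep; field; lra).
    rewrite <- HH. assert (0 < ep * ep) by nra.
    assert (0 < ep * ep * (X * X + X + 1)) by (apply Rmult_lt_0_compat; [lra| pose proof (Rle_0_sqr X); unfold Rsqr in *; lra]).
    replace (ep * (X + 1) * (ep * (X + 1))) with (ep * ep * X + ep * ep * (X * X + X + 1)) by ring.
    lra. }
  apply hull_iff in Hu; auto. destruct Hu as [Hu _].
  assert (orient u (q1, q2) (r1, r2) = orient (z1, z2) (q1, q2) (r1, r2) - ep * D * N)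
    by (unfold u, N, orient; simpl; ring).
  fold D in Hu. rewrite H, Hz0 in Hu.
  assert (0 < ep * N * (D * D)) by (apply Rmult_lt_0_compat; [apply Rmult_lt_0_compat|]; lra).
  replace ((0 - ep * D * N) * D) with (- (ep * N * (D * D))) in Hu by ring. lra.
Qed.

Lemma INTPOS (p q r z : Point) : orient p q r <> 0 -> interior (hull3 p q r) z ->
  0 < orient z q r * orient p q r /\ 0 < orient p z r * orient p q r /\
  0 < orient p q z * orient p q r.
Proof.
  intros HD HI.
  assert (E1 : orient q r p = orient p q r) by (pts; ring).
  assert (E2 : orient r p q = orient p q r) by (pts; ring).
  assert (E3 : orient z r p = orient p z r) by (pts; ring).
  assert (E4 : orient z p q = orient p q z) by (pts; ring).
  split; [apply INTPOS1; auto|split].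
  - assert (HD' : orient q r p <> 0) by (rewrite E1; auto).
    assert (HI' : interior (hull3 q r p) z).
    { eapply interior_ext; [|exact HI]. intros u hu. apply hull_sw23, hull_sw12; auto. }
    pose proof (INTPOS1 _ _ _ _ HD' HI'). rewrite E1, E3 in H. auto.
  - assert (HD' : orient r p q <> 0) by (rewrite E2; auto).
    assert (HI' : interior (hull3 r p q) z).
    { eapply interior_ext; [|exact HI]. intros u hu. apply hull_sw12, hull_sw23; auto. }
    pose proof (INTPOS1 _ _ _ _ HD' HI'). rewrite E2, E4 in H. auto.
Qed.

Definition lin (x y : Point) (s : R) : Point := padd x (pscale s (psub y x)).

Lemma or_lin1 x y s q r : orient (lin x y s) q r = (1 - s) * orient x q r + s * orient y q r.
Proof. unfold lin; pts; ring. Qed.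
Lemma or_lin2 x y s p r : orient p (lin x y s) r = (1 - s) * orient p x r + s * orient p y r.
Proof. unfold lin; pts; ring. Qed.
Lemma or_lin3 x y s p q : orient p q (lin x y s) = (1 - s) * orient p q x + s * orient p q y.
Proof. unfold lin; pts; ring. Qed.

Definition pos3 p q r z := 0 < orient z q r * orient p q r /\ 0 < orient p z r * orient p q r
     /\ 0 < orient p q z * orient p q r.
Definition nn3 p q r z := 0 <= orient z q r * orient p q r /\ 0 <= orient p z r * orient p q r
     /\ 0 <= orient p q z * orient p q r.

Lemma lin_pos p q r x y s : nn3 p q r x -> pos3 p q r y -> 0 < s <= 1 -> pos3 p q r (lin x y s).
Proof.
  unfold nn3, pos3; rewrite !or_lin1, !or_lin2, !or_lin3. intros [? [? ?]] [? [? ?]] ?.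
  repeat split; nra.
Qed.
Lemma lin_pos2 p q r x y s : pos3 p q r x -> nn3 p q r y -> 0 <= s < 1 -> pos3 p q r (lin x y s).
Proof.
  unfold nn3, pos3; rewrite !or_lin1, !or_lin2, !or_lin3. intros [? [? ?]] [? [? ?]] ?.
  repeat split; nra.
Qed.
Lemma lin_nn p q r x y s : nn3 p q r x -> nn3 p q r y -> 0 <= s <= 1 -> nn3 p q r (lin x y s).
Proof.
  unfold nn3; rewrite !or_lin1, !or_lin2, !or_lin3. intros [? [? ?]] [? [? ?]] ?.
  repeat split; nra.
Qed.

Lemma centroid_pos p q r : orient p q r <> 0 -> pos3 p q r (centroid (p, q, r)).
Proof.
  intro HD. assert (0 < orient p q r * orient p q r)
    by (destruct (Rtotal_order (orient p q r) 0) as [h|[h|h]]; [nra|contradiction|nra]).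
  unfold pos3, centroid.
  replace (orient ((fst p + fst q + fst r) / 3, (snd p + snd q + snd r) / 3) q r) with (orient p q r / 3) by (pts; field).
  replace (orient p ((fst p + fst q + fst r) / 3, (snd p + snd q + snd r) / 3) r) with (orient p q r / 3) by (pts; field).
  replace (orient p q ((fst p + fst q + fst r) / 3, (snd p + snd q + snd r) / 3)) with (orient p q r / 3) by (pts; field).
  repeat split; lra.
Qed.

Lemma small1 (a c : R) : 0 < a -> exists s0, 0 < s0 /\ forall s, 0 <= s <= s0 -> 0 < (1 - s) * a + s * c.
Proof.
  intro Ha. pose proof (Rabs_pos c).
  exists (a / (a + Rabs c + 1)). split. { apply Rdiv_lt_0_compat; lra. }
  intros s [H0 H1].
  assert (s * (a + Rabs c + 1) <= a).
  { apply Rmult_le_compat_r with (r := a + Rabs c + 1) in H1; [|lra].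
    replace (a / (a + Rabs c + 1) * (a + Rabs c + 1)) with a in H1 by (field; lra). lra. }
  assert (- Rabs c <= c) by (apply Rabs_le_between, Rle_refl || (pose proof (Rle_abs (-c)); rewrite Rabs_Ropp in *; lra)).
  assert (s * c >= - (s * Rabs c)) by nra.
  destruct (Req_dec s 0). { subst; lra. } lra.
Qed.

Lemma small3 (a1 c1 a2 c2 a3 c3 : R) : 0 < a1 -> 0 < a2 -> 0 < a3 ->
  exists s, 0 < s <= 1 /\ 0 < (1 - s) * a1 + s * c1 /\ 0 < (1 - s) * a2 + s * c2 /\ 0 < (1 - s) * a3 + s * c3.
Proof.
  intros H1 H2 H3.
  destruct (small1 a1 c1 H1) as [s1 [P1 S1]].
  destruct (small1 a2 c2 H2) as [s2 [P2 S2]].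
  destruct (small1 a3 c3 H3) as [s3 [P3 S3]].
  destruct (min3_pos s1 s2 (Rmin s3 1)) as [s [Hs [E1 [E2 E3]]]]; auto.
  { apply Rmin_pos; lra. }
  pose proof (Rmin_l s3 1); pose proof (Rmin_r s3 1).
  exists s. repeat split; try lra; [apply S1|apply S2|apply S3]; lra.
Qed.

Lemma NEAR p q r p' q' r' z : orient p q r <> 0 -> orient p' q' r' <> 0 ->
  pos3 p q r z -> nn3 p' q' r' z -> exists v, pos3 p q r v /\ pos3 p' q' r' v.
Proof.
  intros HD HD' Hz Hz'. set (g := centroid (p', q', r')).
  destruct Hz as [a1 [a2 a3]].
  destruct (small3 _ (orient g q r * orient p q r) _ (orient p g r * orient p q r)
     _ (orient p q g * orient p q r) a1 a2 a3) as [s [Hs [b1 [b2 b3]]]].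
  exists (lin z g s). split.
  - unfold pos3; rewrite or_lin1, or_lin2, or_lin3. repeat split; nra.
  - apply lin_pos; auto. apply centroid_pos; auto.
Qed.

Lemma perm3_inv {A} (a b c : A) L : Permutation [a;b;c] L ->
  L = [a;b;c] \/ L = [a;c;b] \/ L = [b;a;c] \/ L = [b;c;a] \/ L = [c;a;b] \/ L = [c;b;a].
Proof.
  intro H. destruct (Permutation_vs_cons_inv (Permutation_sym H)) as [l1 [l2 E]].
  subst L. apply Permutation_cons_app_inv in H. apply Permutation_length_2_inv in H.
  destruct l1 as [|x [|y [|z l1]]]; simpl in *.
  - destruct H as [H|H]; rewrite H; auto.
  - destruct l2 as [|u l2]; destruct H as [H|H]; inversion H; subst; simpl; auto 10.
  - destruct l2; destruct H as [H|H]; inversion H; subst; simpl; auto 10.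
  - apply Permutation_length in H0 || idtac. destruct H as [H|H]; inversion H.
Qed.

Lemma sim_or (a c d0 d1 d2 : Point) :
  orient (padd (cmul a d0) c) (padd (cmul a d1) c) (padd (cmul a d2) c)
  = (fst a * fst a + snd a * snd a) * orient d0 d1 d2.
Proof. unfold cmul; pts; ring. Qed.

Lemma sim_zero (a c d : Point) : fst a = 0 -> snd a = 0 -> padd (cmul a d) c = c.
Proof. destruct a, c, d; simpl; intros; subst. unfold padd, cmul; simpl. apply pair_eq; ring. Qed.

Lemma ndW d0 d1 d2 psi : 0 < orient d0 d1 d2 -> is_Tgraph d0 d1 d2 psi -> is_nondegenerate psi ->
  forall x y, orient (psi (x,y)) (psi ((x+1)%Z,y)) (psi (x,(y+1)%Z)) <> 0.
Proof.
  intros Ho TG ND x y Hz.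
  destruct (tg_white_similar _ _ _ _ TG (x,y)) as [a [c HP]]. simpl in HP.
  pose proof (nd_white _ ND (x,y)) as NW. simpl in NW.
  set (P := psi (x,y)) in *. set (Q := psi ((x+1)%Z,y)) in *. set (S := psi (x,(y+1)%Z)) in *.
  set (I0 := padd (cmul a d0) c) in *. set (I1 := padd (cmul a d1) c) in *.
  set (I2 := padd (cmul a d2) c) in *.
  assert (Hk : orient I0 I1 I2 = 0).
  { clear - HP Hz. clearbody P Q S I0 I1 I2. apply Permutation_sym, perm3_inv in HP.
    destruct HP as [H|[H|[H|[H|[H|H]]]]]; injection H; intros; subst.
    all: match goal with Hz : orient ?a ?b ?c = 0 |- orient ?x ?y ?z = 0 =>
      first [ assert (E: orient x y z = orient a b c) by (pts; ring)
            | assert (E: orient x y z = - orient a b c) by (pts; ring)]; lra end. }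
  unfold I0, I1, I2 in Hk. rewrite sim_or in Hk.
  assert (fst a * fst a + snd a * snd a = 0).
  { apply Rmult_integral in Hk. destruct Hk; auto. lra. }
  assert (fst a = 0) by nra. assert (snd a = 0) by nra.
  assert (J0 : I0 = c) by (apply sim_zero; auto).
  assert (J1 : I1 = c) by (apply sim_zero; auto).
  assert (J2 : I2 = c) by (apply sim_zero; auto).
  apply NW.
  assert (HM : In P [I0;I1;I2] /\ In Q [I0;I1;I2] /\ In S [I0;I1;I2]).
  { repeat split; eapply Permutation_in; eauto; simpl; auto. }
  rewrite J0, J1, J2 in HM. simpl in HM.
  destruct HM as [h1 [h2 h3]]. intuition congruence.
Qed.

Lemma sq_min (d1 d2 x : R) : 0 < d1 -> 0 < d2 -> x < Rmin d1 d2 * Rmin d1 d2 -> x < d1 * d1 /\ x < d2 * d2.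
Proof.
  intros. pose proof (Rmin_l d1 d2); pose proof (Rmin_r d1 d2).
  assert (0 < Rmin d1 d2) by (apply Rmin_pos; auto). split; nra.
Qed.

Lemma HD p r t mu : orient p r t <> 0 -> 0 < mu < 1 -> exists d, 0 < d /\ forall v,
  dist2 v (lin p r mu) < d * d -> 0 < orient p r v * orient p r t -> pos3 p r t v.
Proof.
  intros HD Hmu. set (D := orient p r t) in *. set (m := lin p r mu).
  assert (HD2 : 0 < D * D) by (destruct (Rtotal_order D 0) as [hh|[hh|hh]]; [nra|contradiction|nra]).
  assert (E1 : orient m r t = (1 - mu) * D) by (unfold m, D; rewrite or_lin1; pts; ring).
  assert (E2 : orient m t p = mu * D) by (unfold m, D; rewrite or_lin1; pts; ring).
  assert (P1 : 0 < Rabs (orient m r t)) by (apply Rabs_pos_lt; rewrite E1; intro h; apply Rmult_integral in h; destruct h; [lra|auto]).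
  assert (P2 : 0 < Rabs (orient m t p)) by (apply Rabs_pos_lt; rewrite E2; intro h; apply Rmult_integral in h; destruct h; [lra|auto]).
  destruct (cont r t m _ P1) as [e1 [He1 C1]].
  destruct (cont t p m _ P2) as [e2 [He2 C2]].
  exists (Rmin e1 e2). split. { apply Rmin_pos; auto. }
  intros v Hv Hs. apply sq_min in Hv; auto. destruct Hv as [Hv1 Hv2].
  unfold pos3. fold D. repeat split; auto.
  - eapply same_sign; [|apply C1; auto]. rewrite E1. nra.
  - rewrite (or_cyc p v t). eapply same_sign; [|apply C2; auto]. rewrite E2. nra.
Qed.

Lemma lin_lin p r lam mu : 0 < lam -> lin p (lin p r lam) (mu / lam) = lin p r mu.
Proof. intro. unfold lin; pts. apply pair_eq; field; lra. Qed.

Lemma or_mid p r lam v : orient p (lin p r lam) v = lam * orient p r v.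
Proof. unfold lin; pts; ring. Qed.
Lemma or_on p r mu : orient p r (lin p r mu) = 0.
Proof. unfold lin; pts; ring. Qed.

Lemma dist2_lin m k s : dist2 (lin m k s) m = s * s * dist2 k m.
Proof. unfold lin; pts; ring. Qed.

Lemma small_s (K d : R) : 0 <= K -> 0 < d -> exists s, 0 < s <= 1 /\ s * s * K < d * d.
Proof.
  intros HK Hd. set (d' := Rmin d 1).
  assert (0 < d') by (apply Rmin_pos; lra). assert (d' <= d) by apply Rmin_l. assert (d' <= 1) by apply Rmin_r.
  exists (d' / (K + 1)). split.
  - split. apply Rdiv_lt_0_compat; lra.
    apply Rmult_le_reg_r with (K + 1); [lra|]. unfold Rdiv. rewrite Rmult_assoc, Rinv_l by lra. nra.
  - set (s := d' / (K + 1)). assert (Hs : s * (K + 1) = d') by (unfold s; field; lra).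
    assert (0 < s) by (unfold s; apply Rdiv_lt_0_compat; lra).
    assert (s * s * K < s * s * (K + 1) * (K + 1)).
    { assert (0 < s * s) by nra. assert (K < (K + 1) * (K + 1)) by nra. nra. }
    replace (s * s * (K + 1) * (K + 1)) with (d' * d') in H2 by (rewrite <- Hs; ring).
    nra.
Qed.

Lemma dist2_pos a b : 0 <= dist2 a b.
Proof. unfold dist2. pose proof (Rle_0_sqr (fst a - fst b)); pose proof (Rle_0_sqr (snd a - snd b)). unfold Rsqr in *; lra. Qed.
Lemma colin3 p r a b c : p <> r -> orient p r a = 0 -> orient p r b = 0 -> orient p r c = 0 ->
  orient a b c = 0.
Proof.
  intros Hpr Ha Hb Hc.
  assert (E1 : orient a b c * (fst r - fst p) = orient p r c * (fst b - fst p) - orient p r b * (fst c - fst p)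
     + orient p r b * (fst a - fst p) - orient p r a * (fst b - fst p)
     + orient p r a * (fst c - fst p) - orient p r c * (fst a - fst p)) by (pts; ring).
  assert (E2 : orient a b c * (snd r - snd p) = orient p r c * (snd b - snd p) - orient p r b * (snd c - snd p)
     + orient p r b * (snd a - snd p) - orient p r a * (snd b - snd p)
     + orient p r a * (snd c - snd p) - orient p r c * (snd a - snd p)) by (pts; ring).
  rewrite Ha, Hb, Hc in E1, E2.
  destruct (Req_dec (fst r - fst p) 0) as [h1|h1].
  - destruct (Req_dec (snd r - snd p) 0) as [h2|h2].
    + exfalso; apply Hpr. destruct p, r; simpl in *. apply pair_eq; lra.
    + apply Rmult_eq_reg_r with (snd r - snd p); auto. lra.
  - apply Rmult_eq_reg_r with (fst r - fst p); auto. lra.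
Qed.

Lemma sqpos (x : R) : 0 <= x * x.
Proof. pose proof (Rle_0_sqr x); unfold Rsqr in *; lra. Qed.
Lemma sqpos' (x : R) : x <> 0 -> 0 < x * x.
Proof. intro; destruct (Rtotal_order x 0) as [h|[h|h]]; [nra|contradiction|nra]. Qed.

Lemma nn3_v1 p q r : nn3 p q r p.
Proof. unfold nn3. pose proof (sqpos (orient p q r)). repeat split; [lra| |]; pts; nra. Qed.
Lemma nn3_v2 p q r : nn3 p q r q.
Proof. unfold nn3. pose proof (sqpos (orient p q r)). repeat split; [|lra|]; pts; nra. Qed.
Lemma nn3_v3 p q r : nn3 p q r r.
Proof. unfold nn3. pose proof (sqpos (orient p q r)). repeat split; [| |lra]; pts; nra. Qed.

Lemma LOCAL p q r t1 t2 lam mu u1 u2 u3 :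
  q = lin p r lam -> 0 < mu < lam -> lam < 1 -> p <> r ->
  orient p r t1 <> 0 -> orient p q t2 <> 0 ->
  ~ (exists v, pos3 p r t1 v /\ pos3 p q t2 v) ->
  orient u1 u2 u3 <> 0 -> nn3 u1 u2 u3 (lin p r mu) ->
  (exists v, pos3 u1 u2 u3 v /\ pos3 p r t1 v) \/ (exists v, pos3 u1 u2 u3 v /\ pos3 p q t2 v).
Proof.
  intros Hq Hmu Hlam Hpr H1 H2 Hdis HW Hm.
  set (m := lin p r mu) in *.
  set (D1 := orient p r t1) in *. set (o2 := orient p r t2).
  assert (ED2 : orient p q t2 = lam * o2) by (rewrite Hq; apply or_mid).
  destruct (HD p r t1 mu H1 ltac:(lra)) as [d1 [Hd1 P1]].
  assert (Hm2 : m = lin p q (mu/lam)) by (rewrite Hq; symmetry; apply lin_lin; lra).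
  assert (Hml : 0 < mu / lam < 1).
  { split. apply Rdiv_lt_0_compat; lra.
    apply Rmult_lt_reg_r with lam; [lra|]. unfold Rdiv. rewrite Rmult_assoc, Rinv_l by lra. lra. }
  destruct (HD p q t2 (mu/lam) H2 Hml) as [d2 [Hd2 P2]].
  rewrite <- Hm2 in P2.
  assert (Hdd : 0 < Rmin d1 d2) by (apply Rmin_pos; auto).
  assert (HD1 : 0 < D1 * D1) by (apply sqpos'; auto).
  assert (Hopp : D1 * o2 < 0).
  { destruct (Rlt_or_le (D1*o2) 0) as [h|h]; auto. exfalso.
    assert (Ho2 : o2 <> 0) by (intro h'; apply H2; rewrite ED2, h'; ring).
    assert (h2 : 0 < D1 * o2).
    { destruct (Rle_lt_or_eq_dec _ _ h) as [h'|h']; auto. symmetry in h'.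
      apply Rmult_integral in h'. destruct h'; contradiction. }
    destruct (small_s (dist2 t1 m) (Rmin d1 d2) (dist2_pos _ _) Hdd) as [s [Hs Hsd]].
    apply Hdis. exists (lin m t1 s).
    rewrite <- dist2_lin in Hsd. apply sq_min in Hsd; auto. destruct Hsd as [Hs1 Hs2].
    assert (Eo : orient p r (lin m t1 s) = s * D1) by (rewrite or_lin3; unfold m; rewrite or_on; unfold D1; ring).
    split.
    - apply P1; auto. rewrite Eo. fold D1. replace (s * D1 * D1) with (s * (D1 * D1)) by ring.
      apply Rmult_lt_0_compat; lra.
    - apply P2; auto. rewrite Hq, or_mid, <- Hq, Eo, ED2.
      assert (0 < lam * lam) by nra. assert (0 < s * (D1 * o2)) by nra.
      replace (lam * (s * D1) * (lam * o2)) with ((lam * lam) * (s * (D1 * o2))) by ring. nra. }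
  assert (Hk : exists k, pos3 u1 u2 u3 k /\ orient p r k <> 0).
  { set (g := centroid (u1, u2, u3)). assert (Hg : pos3 u1 u2 u3 g) by (apply centroid_pos; auto).
    destruct (Req_dec (orient p r g) 0) as [hg|hg]; [|exists g; auto].
    assert (exists u, nn3 u1 u2 u3 u /\ orient p r u <> 0) as [u [Hu Hou]].
    { destruct (Req_dec (orient p r u1) 0) as [a1|a1]; [|exists u1; split; auto; apply nn3_v1].
      destruct (Req_dec (orient p r u2) 0) as [a2|a2]; [|exists u2; split; auto; apply nn3_v2].
      destruct (Req_dec (orient p r u3) 0) as [a3|a3]; [|exists u3; split; auto; apply nn3_v3].
      exfalso. apply HW. eapply colin3; eauto. }
    exists (lin g u (1/2)). split. apply lin_pos2; auto; lra.
    rewrite or_lin3, hg. intro h. apply Hou. lra. }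
  destruct Hk as [k [Hk Hok]].
  destruct (small_s (dist2 k m) (Rmin d1 d2) (dist2_pos _ _) Hdd) as [s [Hs Hsd]].
  rewrite <- dist2_lin in Hsd. apply sq_min in Hsd; auto. destruct Hsd as [Hs1 Hs2].
  assert (Hv : pos3 u1 u2 u3 (lin m k s)) by (apply lin_pos; auto).
  assert (Eov : orient p r (lin m k s) = s * orient p r k)
    by (rewrite or_lin3; unfold m; rewrite or_on; ring).
  destruct (Rlt_or_le 0 (orient p r k * D1)) as [h|h].
  - left. exists (lin m k s). split; auto. apply P1; auto. rewrite Eov. fold D1.
    replace (s * orient p r k * D1) with (s * (orient p r k * D1)) by ring. apply Rmult_lt_0_compat; lra.
  - right. exists (lin m k s). split; auto. apply P2; auto.
    rewrite Hq, or_mid, <- Hq, Eov, ED2.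
    assert (h' : orient p r k * D1 < 0).
    { destruct (Rle_lt_or_eq_dec _ _ h) as [h'|h']; auto.
      apply Rmult_integral in h'. destruct h'; contradiction. }
    assert (0 < orient p r k * o2 * (D1 * D1)).
    { replace (orient p r k * o2 * (D1 * D1)) with ((orient p r k * D1) * (D1 * o2)) by ring. nra. }
    assert (0 < orient p r k * o2).
    { destruct (Rle_lt_dec (orient p r k * o2) 0) as [a|a]; auto. exfalso.
      set (X := orient p r k * o2) in *. set (Y := D1 * D1) in *. clearbody X Y. nra. }
    assert (0 < lam * lam) by nra. assert (0 < s * (orient p r k * o2)) by nra.
    replace (lam * (s * orient p r k) * (lam * o2)) with ((lam * lam) * (s * (orient p r k * o2))) by ring.
    nra.
Qed.

Definition Good d0 d1 d2 psi := 0 < orient d0 d1 d2 /\ is_Tgraph d0 d1 d2 psi /\ is_nondegenerate psi.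

Definition WA (psi : ZP -> Point) (w : ZP) := psi w.
Definition WB (psi : ZP -> Point) (w : ZP) := psi ((fst w + 1)%Z, snd w).
Definition WC (psi : ZP -> Point) (w : ZP) := psi (fst w, (snd w + 1)%Z).

Lemma psiW_eq psi w z : psiW psi w z = hull3 (WA psi w) (WB psi w) (WC psi w) z.
Proof. destruct w; reflexivity. Qed.

Lemma ndW' d0 d1 d2 psi : Good d0 d1 d2 psi -> forall w, orient (WA psi w) (WB psi w) (WC psi w) <> 0.
Proof. intros [? [? ?]] [x y]. unfold WA, WB, WC; simpl. eapply ndW; eauto. Qed.

Lemma L_in d0 d1 d2 psi : Good d0 d1 d2 psi -> forall w z,
  psiW psi w z <-> nn3 (WA psi w) (WB psi w) (WC psi w) z.
Proof. intros G w z. rewrite psiW_eq. apply hull_iff. eapply ndW'; eauto. Qed.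

Lemma L_int d0 d1 d2 psi : Good d0 d1 d2 psi -> forall w z,
  interior (psiW psi w) z <-> pos3 (WA psi w) (WB psi w) (WC psi w) z.
Proof.
  intros G w z. pose proof (ndW' _ _ _ _ G w) as HD.
  assert (E : psiW psi w = hull3 (WA psi w) (WB psi w) (WC psi w)).
  { destruct w; reflexivity. }
  rewrite E. split.
  - apply INTPOS; auto.
  - intros [? [? ?]]. apply INT; auto.
Qed.

Lemma zp_dec (a b : ZP) : {a = b} + {a <> b}.
Proof. decide equality; apply Z.eq_dec. Qed.

Lemma L_disj d0 d1 d2 psi : Good d0 d1 d2 psi -> forall w w' v,
  pos3 (WA psi w) (WB psi w) (WC psi w) v -> pos3 (WA psi w') (WB psi w') (WC psi w') v -> w = w'.
Proof.
  intros G w w' v H1 H2. destruct (zp_dec w w') as [|hne]; auto. exfalso.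
  destruct G as [Ho [TG ND]].
  apply (tg_disjoint _ _ _ _ TG w w' v hne); eapply L_int; (split; [exact Ho| split; auto]) || eauto.
Qed.

Lemma L_bound d0 d1 d2 psi : Good d0 d1 d2 psi -> forall w v,
  ~ pos3 (WA psi w) (WB psi w) (WC psi w) (psi v).
Proof.
  intros G w v H.
  assert (Hv : nn3 (WA psi v) (WB psi v) (WC psi v) (psi v)) by (apply nn3_v1).
  destruct (NEAR _ _ _ _ _ _ _ (ndW' _ _ _ _ G w) (ndW' _ _ _ _ G v) H Hv) as [u [U1 U2]].
  assert (w = v) by (eapply L_disj; eauto). subst w.
  destruct H as [_ [H _]]. unfold WA in H.
  replace (orient (psi v) (psi v) (WC psi v)) with 0 in H by (pts; ring). lra.
Qed.

Lemma L_pbinj psi pb : is_nondegenerate psi -> black_pos_ok psi pb -> forall b b', pb b = pb b' -> b = b'.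
Proof.
  intros ND OK b b' E.
  destruct (OK b) as [[v Hv] [Hb Hbe]]. destruct (OK b') as [_ [Hb' Hbe']].
  destruct (nd_vertex _ ND v) as [b1 [b2 [b3 [n12 [n13 [n23 [Hall [e1 [e2 ne3]]]]]]]]].
  rewrite Hv in Hb, Hbe. rewrite <- E, Hv in Hb', Hbe'.
  apply Hall in Hb. apply Hall in Hb'.
  destruct Hb as [ -> | [ -> | -> ]]; try contradiction.
  destruct Hb' as [ -> | [ -> | -> ]]; try contradiction. auto.
Qed.

Lemma adj_iff w b : adjH w b <-> w = b \/ w = (fst b, (snd b + 1)%Z) \/ w = ((fst b + 1)%Z, snd b).
Proof.
  destruct w as [x y], b as [u v]; unfold adjH; simpl. split.
  - intros [H|[H|H]]; inversion H; subst; [left; auto|right; left|right; right]; f_equal; lia.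
  - intros [H|[H|H]]; inversion H; subst; [left; auto|right; left|right; right]; f_equal; lia.
Qed.

Lemma mid3 (A B C : Point) : orient A B C = 0 -> A <> B -> B <> C -> A <> C ->
  (exists l, 0 < l < 1 /\ B = lin A C l) \/ (exists l, 0 < l < 1 /\ A = lin B C l) \/
  (exists l, 0 < l < 1 /\ C = lin A B l).
Proof.
  intros Ho nAB nBC nAC.
  destruct A as [a1 a2], B as [b1 b2], C as [c1 c2].
  set (e1 := c1 - a1). set (e2 := c2 - a2). set (N := e1 * e1 + e2 * e2).
  assert (HN : 0 < N).
  { unfold N. destruct (Req_dec e1 0); destruct (Req_dec e2 0).
    - exfalso; apply nAC; unfold e1, e2 in *; apply pair_eq; lra.
    - pose proof (sqpos' e2 H0). pose proof (sqpos e1). lra.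
    - pose proof (sqpos' e1 H). pose proof (sqpos e2). lra.
    - pose proof (sqpos' e1 H). pose proof (sqpos e2). lra. }
  set (l := ((b1 - a1) * e1 + (b2 - a2) * e2) / N).
  assert (HB : (b1, b2) = lin (a1, a2) (c1, c2) l).
  { unfold lin, padd, pscale, psub; simpl. unfold orient in Ho; simpl in Ho.
    fold e1 e2 in Ho |- *. apply pair_eq; unfold l.
    - assert (E: ((b1-a1)*e1 + (b2-a2)*e2) * e1 = (b1-a1)*N - e2 * ((b1-a1)*e2 - (b2-a2)*e1)) by (unfold N; ring).
      rewrite Ho in E. replace (((b1 - a1) * e1 + (b2 - a2) * e2) / N * e1) with
        ((((b1 - a1) * e1 + (b2 - a2) * e2) * e1) / N) by (field; lra).
      rewrite E. field. lra.
    - assert (E: ((b1-a1)*e1 + (b2-a2)*e2) * e2 = (b2-a2)*N + e1 * ((b1-a1)*e2 - (b2-a2)*e1)) by (unfold N; ring).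
      rewrite Ho in E. replace (((b1 - a1) * e1 + (b2 - a2) * e2) / N * e2) with
        ((((b1 - a1) * e1 + (b2 - a2) * e2) * e2) / N) by (field; lra).
      rewrite E. field. lra. }
  destruct (Rtotal_order l 0) as [h|[h|h]].
  - right; left. exists (- l / (1 - l)). split.
    + split. apply Rdiv_lt_0_compat; lra.
      apply Rmult_lt_reg_r with (1 - l); [lra|]. unfold Rdiv. rewrite Rmult_assoc, Rinv_l by lra. lra.
    + rewrite HB. unfold lin; pts. apply pair_eq; field; lra.
  - exfalso. apply nAB. rewrite HB, h. unfold lin; pts. apply pair_eq; ring.
  - destruct (Rtotal_order l 1) as [h'|[h'|h']].
    + left. exists l. auto.
    + exfalso. apply nBC. rewrite HB, h'. unfold lin; pts. apply pair_eq; ring.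
    + right; right. exists (1 / l). split.
      * split. apply Rdiv_lt_0_compat; lra.
        apply Rmult_lt_reg_r with l; [lra|]. unfold Rdiv. rewrite Rmult_assoc, Rinv_l by lra. lra.
      * rewrite HB. unfold lin; pts. apply pair_eq; field; lra.
Qed.

Lemma pos3_sw12 p q r z : pos3 p q r z -> pos3 q p r z.
Proof.
  unfold pos3. intros [h1 [h2 h3]].
  replace (orient q p r) with (- orient p q r) by (pts; ring).
  replace (orient z p r) with (- orient p z r) by (pts; ring).
  replace (orient q z r) with (- orient z q r) by (pts; ring).
  replace (orient q p z) with (- orient p q z) by (pts; ring).
  repeat split; lra.
Qed.
Lemma pos3_sw23 p q r z : pos3 p q r z -> pos3 p r q z.
Proof.
  unfold pos3. intros [h1 [h2 h3]].
  replace (orient p r q) with (- orient p q r) by (pts; ring).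
  replace (orient z r q) with (- orient z q r) by (pts; ring).
  replace (orient p z q) with (- orient p q z) by (pts; ring).
  replace (orient p r z) with (- orient p z r) by (pts; ring).
  repeat split; lra.
Qed.

Lemma lin_rev p r l : lin p r l = lin r p (1 - l).
Proof. unfold lin; pts; apply pair_eq; ring. Qed.

Lemma seg_lin z1 z2 p r : seg p r z1 -> seg p r z2 -> z1 <> z2 ->
  exists l1 l2, 0 <= l1 <= 1 /\ 0 <= l2 <= 1 /\ l1 <> l2 /\ z1 = lin p r l1 /\ z2 = lin p r l2.
Proof.
  intros [l1 [H1 E1]] [l2 [H2 E2]] hne. exists l1, l2. repeat split; try lra; auto.
  intro; subst. apply hne; auto.
Qed.

Definition triP psi w := (WA psi w, WB psi w, WC psi w).

Lemma DM d0 d1 d2 psi p q r lam wF wL wR t1 t2 t3 : Good d0 d1 d2 psi ->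
  q = lin p r lam -> 0 < lam < 1 -> p <> r ->
  (forall z, pos3 p r t1 z -> pos3 (WA psi wF) (WB psi wF) (WC psi wF) z) -> orient p r t1 <> 0 ->
  (forall z, pos3 p q t2 z -> pos3 (WA psi wL) (WB psi wL) (WC psi wL) z) -> orient p q t2 <> 0 ->
  (forall z, pos3 q r t3 z -> pos3 (WA psi wR) (WB psi wR) (WC psi wR) z) -> orient q r t3 <> 0 ->
  wF <> wL -> wF <> wR ->
  forall w z1 z2, z1 <> z2 -> nn3 (WA psi w) (WB psi w) (WC psi w) z1 ->
  nn3 (WA psi w) (WB psi w) (WC psi w) z2 -> seg p r z1 -> seg p r z2 ->
  w = wF \/ w = wL \/ w = wR.
Proof.
  intros G Hq Hl Hpr F1 N1 F2 N2 F3 N3 nFL nFR w z1 z2 hne H1 H2 S1 S2.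
  destruct (seg_lin _ _ _ _ S1 S2 hne) as [l1 [l2 [I1 [I2 [n12 [E1 E2]]]]]].
  set (th := if Req_EM_T ((l1 + l2) / 2) lam then 1/4 else 1/2).
  assert (Hth : 0 < th < 1) by (unfold th; destruct Req_EM_T; lra).
  set (mu := l1 + th * (l2 - l1)).
  assert (Hmu : mu <> lam).
  { unfold mu, th; destruct Req_EM_T; intro; lra. }
  assert (Hmu01 : 0 < mu < 1).
  { unfold mu. destruct (Rlt_or_le l1 l2); split; nra. }
  assert (Hm : nn3 (WA psi w) (WB psi w) (WC psi w) (lin p r mu)).
  { replace (lin p r mu) with (lin z1 z2 th). apply lin_nn; auto; lra.
    rewrite E1, E2. unfold lin, mu; pts. apply pair_eq; ring. }
  pose proof (ndW' _ _ _ _ G w) as HW.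
  destruct (Rlt_or_le mu lam) as [hm|hm].
  - destruct (LOCAL p q r t1 t2 lam mu _ _ _ Hq ltac:(lra) ltac:(lra) Hpr N1 N2
       ltac:(intros [v [a b]]; apply nFL; eapply L_disj; eauto) HW Hm) as [[v [a b]]|[v [a b]]].
    + left. eapply L_disj; eauto.
    + right; left. eapply L_disj; eauto.
  - assert (hm' : lam < mu) by lra.
    assert (Hq' : q = lin r p (1 - lam)) by (rewrite Hq; apply lin_rev).
    assert (N1' : orient r p t1 <> 0) by (replace (orient r p t1) with (- orient p r t1) by (pts; ring); intro; apply N1; lra).
    assert (N3' : orient r q t3 <> 0) by (replace (orient r q t3) with (- orient q r t3) by (pts; ring); intro; apply N3; lra).
    rewrite lin_rev in Hm.
    destruct (LOCAL r q p t1 t3 (1 - lam) (1 - mu) _ _ _ Hq' ltac:(lra) ltac:(lra) ltac:(auto) N1' N3'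
       ltac:(intros [v [a b]]; apply nFR; eapply L_disj; [exact G| apply F1, pos3_sw12; exact a| apply F3, pos3_sw12; exact b]) HW Hm) as [[v [a b]]|[v [a b]]].
    + left. eapply L_disj; eauto. apply F1, pos3_sw12; exact b.
    + right; right. eapply L_disj; eauto. apply F3, pos3_sw12; exact b.
Qed.

Lemma hv1 a b c : hull3 a b c a.
Proof. exists 1, 0, 0. repeat split; try lra. pts. apply pair_eq; ring. Qed.
Lemma hv2 a b c : hull3 a b c b.
Proof. exists 0, 1, 0. repeat split; try lra. pts. apply pair_eq; ring. Qed.
Lemma hv3 a b c : hull3 a b c c.
Proof. exists 0, 0, 1. repeat split; try lra. pts. apply pair_eq; ring. Qed.

Lemma not_ext (S : Point -> Prop) p r q l : S p -> S r -> p <> r -> 0 < l < 1 -> q = lin p r l -> ~ extreme S q.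
Proof.
  intros Hp Hr Hpr Hl Hq [_ H]. apply H. exists p, r. split; auto. split; auto.
  split; auto. exists l. split; auto.
Qed.

Lemma hull_seg p q r l z : q = lin p r l -> 0 <= l <= 1 -> hull3 p q r z -> seg p r z.
Proof.
  intros Hq Hl [a [b [c [Ha [Hb [Hc [Hs Hz]]]]]]]. exists (b * l + c). split.
  - split; nra.
  - subst. unfold lin; pts. replace a with (1 - b - c) by lra. apply pair_eq; ring.
Qed.

Lemma pb_is d0 d1 d2 psi pb : Good d0 d1 d2 psi -> black_pos_ok psi pb -> forall b v,
  psiB psi b (psi v) -> ~ extreme (psiB psi b) (psi v) -> pb b = psi v.
Proof.
  intros [_ [TG _]] OK b v H1 H2.
  destruct (tg_one_inner _ _ _ _ TG b) as [v0 [_ [_ U]]].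
  destruct (OK b) as [[v1 E] [Hb Hbe]]. rewrite E in *.
  rewrite (U v1 Hb Hbe), (U v H1 H2). auto.
Qed.

Ltac ornz := let h := fresh in intro h;
  match goal with h : orient ?a ?b ?c = 0, H : orient ?x ?y ?z <> 0 |- False =>
   apply H; first [ assert (orient x y z = orient a b c) by (unfold orient; ring)
                  | assert (orient x y z = - orient a b c) by (unfold orient; ring)]; lra end.

Ltac neqp := let h := fresh in intro h; match goal with
  H : orient ?x ?y ?z <> 0 |- _ => apply H; rewrite h; unfold orient; ring end.

Lemma black_struct d0 d1 d2 psi pb x y : Good d0 d1 d2 psi -> black_pos_ok psi pb ->
  let A := psi ((x+1)%Z, y) in let B := psi (x, (y+1)%Z) in let C := psi ((x+1)%Z, (y+1)%Z) in
  A <> B /\ B <> C /\ A <> C /\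
  ((exists l, 0 < l < 1 /\ B = lin A C l /\ pb (x,y) = B) \/
   (exists l, 0 < l < 1 /\ A = lin B C l /\ pb (x,y) = A) \/
   (exists l, 0 < l < 1 /\ C = lin A B l /\ pb (x,y) = C)).
Proof.
  intros G OK A B C.
  pose proof (ndW' _ _ _ _ G (x,y)) as W0. pose proof (ndW' _ _ _ _ G (x,(y+1)%Z)) as WU.
  pose proof (ndW' _ _ _ _ G ((x+1)%Z,y)) as WR. unfold WA, WB, WC in *; simpl in *.
  fold A B C in W0, WU, WR.
  assert (nAB : A <> B) by (intro h; apply W0; rewrite h; unfold orient; ring).
  assert (nBC : B <> C) by (intro h; apply WU; rewrite h; unfold orient; ring).
  assert (nAC : A <> C) by (intro h; apply WR; rewrite h; unfold orient; ring).
  destruct G as [Ho [TG ND]] eqn:EG.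
  pose proof (tg_black_segment _ _ _ _ TG (x,y)) as Hcol. simpl in Hcol. fold A B C in Hcol.
  assert (EB : forall z, psiB psi (x,y) z = hull3 A B C z) by reflexivity.
  repeat split; auto.
  destruct (mid3 A B C Hcol nAB nBC nAC) as [[l [Hl E]]|[[l [Hl E]]|[l [Hl E]]]].
  - left. exists l. split; [auto|split; [auto|]]. apply (pb_is _ _ _ _ _ G OK).
    + rewrite EB; apply hv2.
    + eapply (not_ext _ A C); eauto; rewrite EB; [apply hv1|apply hv3].
  - right; left. exists l. split; [auto|split; [auto|]]. apply (pb_is _ _ _ _ _ G OK).
    + rewrite EB; apply hv1.
    + eapply (not_ext _ B C); eauto; rewrite EB; [apply hv2|apply hv3].
  - right; right. exists l. split; [auto|split; [auto|]]. apply (pb_is _ _ _ _ _ G OK).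
    + rewrite EB; apply hv3.
    + eapply (not_ext _ A B); eauto; rewrite EB; [apply hv1|apply hv2].
Qed.

Ltac nnv := first [apply nn3_v1|apply nn3_v2|apply nn3_v3].

Lemma EDGE d0 d1 d2 psi pb : Good d0 d1 d2 psi -> black_pos_ok psi pb -> forall w b,
  adjH w b -> nn3 (WA psi w) (WB psi w) (WC psi w) (pb b).
Proof.
  intros G OK w [x y] Hadj. apply adj_iff in Hadj. simpl in Hadj.
  pose proof (black_struct _ _ _ _ _ x y G OK) as BS. cbv zeta in BS.
  destruct BS as [_ [_ [_ [[l [Hl [E Hp]]]|[[l [Hl [E Hp]]]|[l [Hl [E Hp]]]]]]]];
  rewrite Hp; destruct Hadj as [-> |[-> | ->]]; unfold WA, WB, WC; simpl;
  first [nnv | rewrite E; apply lin_nn; [nnv|nnv|lra]].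
Qed.

Lemma ADJ_DRAWN d0 d1 d2 psi : Good d0 d1 d2 psi -> forall w b, adjH w b -> drawn_edge psi w b.
Proof.
  intros G w [x y] Hadj. apply adj_iff in Hadj. simpl in Hadj.
  pose proof (ndW' _ _ _ _ G (x,y)) as W0. pose proof (ndW' _ _ _ _ G (x,(y+1)%Z)) as WU.
  pose proof (ndW' _ _ _ _ G ((x+1)%Z,y)) as WR. unfold WA, WB, WC in *; simpl in *.
  unfold drawn_edge. destruct Hadj as [-> |[-> | ->]]; rewrite ?psiW_eq; unfold WA, WB, WC; simpl.
  - exists (psi ((x+1)%Z, y)), (psi (x, (y+1)%Z)).
    split; [neqp|]. split; [apply hv2|split; [apply hv1|split; [apply hv3|apply hv2]]].
  - exists (psi (x, (y+1)%Z)), (psi ((x+1)%Z, (y+1)%Z)).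
    split; [neqp|]. split; [apply hv1|split; [apply hv2|split; [apply hv2|apply hv3]]].
  - exists (psi ((x+1)%Z, y)), (psi ((x+1)%Z, (y+1)%Z)).
    split; [neqp|]. split; [apply hv1|split; [apply hv1|split; [apply hv3|apply hv3]]].
Qed.

Lemma DRAWN_ADJ d0 d1 d2 psi pb : Good d0 d1 d2 psi -> black_pos_ok psi pb ->
  forall w b, drawn_edge psi w b -> adjH w b.
Proof.
  intros G OK w [x y] [z1 [z2 [hne [Hw1 [Hb1 [Hw2 Hb2]]]]]].
  apply (L_in _ _ _ _ G) in Hw1. apply (L_in _ _ _ _ G) in Hw2.
  pose proof (ndW' _ _ _ _ G (x,y)) as W0. pose proof (ndW' _ _ _ _ G (x,(y+1)%Z)) as WU.
  pose proof (ndW' _ _ _ _ G ((x+1)%Z,y)) as WR. unfold WA, WB, WC in W0, WU, WR; simpl in W0, WU, WR.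
  pose proof (black_struct _ _ _ _ _ x y G OK) as BS. cbv zeta in BS.
  change (hull3 (psi ((x+1)%Z, y)) (psi (x, (y+1)%Z)) (psi ((x+1)%Z, (y+1)%Z)) z1) in Hb1.
  change (hull3 (psi ((x+1)%Z, y)) (psi (x, (y+1)%Z)) (psi ((x+1)%Z, (y+1)%Z)) z2) in Hb2.
  apply adj_iff. simpl.
  assert (d01 : (x, y) <> (x, (y + 1)%Z)) by (intro h; inversion h; lia).
  assert (d02 : (x, y) <> ((x + 1)%Z, y)) by (intro h; inversion h; lia).
  assert (d12 : (x, (y + 1)%Z) <> ((x + 1)%Z, y)) by (intro h; inversion h; lia).
  destruct BS as [nAB [nBC [nAC [[l [Hl [E _]]]|[[l [Hl [E _]]]|[l [Hl [E _]]]]]]]].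
  - (* B middle: p = A, q = B, r = C *)
    assert (S1 := hull_seg _ _ _ l _ E ltac:(lra) Hb1).
    assert (S2 := hull_seg _ _ _ l _ E ltac:(lra) Hb2).
    destruct (DM _ _ _ _ _ _ _ l ((x+1)%Z, y) (x, y) (x, (y+1)%Z)
      (psi ((x+1+1)%Z, y)) (psi (x, y)) (psi (x, (y+1+1)%Z)) G E Hl nAC) with (w := w) (z1 := z1) (z2 := z2)
      as [h|[h|h]]; auto;
    first [ (intros z hz; unfold WA, WB, WC; simpl; first [exact hz | apply pos3_sw23; exact hz
       | apply pos3_sw12; exact hz | apply pos3_sw12, pos3_sw23; exact hz
       | apply pos3_sw12, pos3_sw23, pos3_sw12; exact hz]) | ornz ].
  - (* A middle: p = B, q = A, r = C *)
    apply hull_sw12 in Hb1. apply hull_sw12 in Hb2.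
    assert (S1 := hull_seg _ _ _ l _ E ltac:(lra) Hb1).
    assert (S2 := hull_seg _ _ _ l _ E ltac:(lra) Hb2).
    destruct (DM _ _ _ _ _ _ _ l (x, (y+1)%Z) (x, y) ((x+1)%Z, y)
      (psi (x, (y+1+1)%Z)) (psi (x, y)) (psi ((x+1+1)%Z, y)) G E Hl nBC) with (w := w) (z1 := z1) (z2 := z2)
      as [h|[h|h]]; auto;
    first [ (intros z hz; unfold WA, WB, WC; simpl; first [exact hz | apply pos3_sw23; exact hz
       | apply pos3_sw12; exact hz | apply pos3_sw12, pos3_sw23; exact hz
       | apply pos3_sw12, pos3_sw23, pos3_sw12; exact hz]) | ornz ].
  - (* C middle: p = A, q = C, r = B *)
    apply hull_sw23 in Hb1. apply hull_sw23 in Hb2.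
    assert (S1 := hull_seg _ _ _ l _ E ltac:(lra) Hb1).
    assert (S2 := hull_seg _ _ _ l _ E ltac:(lra) Hb2).
    destruct (DM _ _ _ _ _ _ _ l (x, y) ((x+1)%Z, y) (x, (y+1)%Z)
      (psi (x, y)) (psi ((x+1+1)%Z, y)) (psi (x, (y+1+1)%Z)) G E Hl nAB) with (w := w) (z1 := z1) (z2 := z2)
      as [h|[h|h]]; auto;
    first [ (intros z hz; unfold WA, WB, WC; simpl; first [exact hz | apply pos3_sw23; exact hz
       | apply pos3_sw12; exact hz | apply pos3_sw12, pos3_sw23; exact hz
       | apply pos3_sw12, pos3_sw23, pos3_sw12; exact hz]) | ornz ].
Qed.

Lemma posW_eq psi w : posW psi w = centroid (WA psi w, WB psi w, WC psi w).
Proof. destruct w; reflexivity. Qed.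

Lemma posW_pos d0 d1 d2 psi : Good d0 d1 d2 psi -> forall w, pos3 (WA psi w) (WB psi w) (WC psi w) (posW psi w).
Proof. intros G w. rewrite posW_eq. apply centroid_pos. eapply ndW'; eauto. Qed.

Lemma lin_solve g q q' t t' : lin g q t = lin g q' t' -> 0 < t' -> q' = lin g q (t / t').
Proof.
  destruct g as [g1 g2], q as [q1 q2], q' as [r1 r2]. unfold lin, padd, pscale, psub; simpl.
  intros H Ht. injection H; intros H2 H1. apply pair_eq.
  - assert (t' * (r1 - g1) = t * (q1 - g1)) by lra.
    replace r1 with (g1 + (t' * (r1 - g1)) / t') by (field; lra). rewrite H0. field; lra.
  - assert (t' * (r2 - g2) = t * (q2 - g2)) by lra.
    replace r2 with (g2 + (t' * (r2 - g2)) / t') by (field; lra). rewrite H0. field; lra.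
Qed.

Lemma lin0 g q : lin g q 0 = g.
Proof. unfold lin; pts; apply pair_eq; ring. Qed.
Lemma lin1 g q : lin g q 1 = q.
Proof. unfold lin; pts; apply pair_eq; ring. Qed.

Lemma div_lt1 a b : 0 <= a -> a < b -> 0 <= a / b < 1.
Proof.
  intros. split. apply Rmult_le_pos; [lra| apply Rlt_le, Rinv_0_lt_compat; lra].
  apply Rmult_lt_reg_r with b; [lra|]. unfold Rdiv. rewrite Rmult_assoc, Rinv_l by lra. lra.
Qed.

Lemma CROSS d0 d1 d2 psi pb : Good d0 d1 d2 psi -> black_pos_ok psi pb ->
  forall w b w' b' z, adjH w b -> adjH w' b' -> (w, b) <> (w', b') ->
     cseg (posW psi w) (pb b) z -> cseg (posW psi w') (pb b') z ->
     (w = w' /\ z = posW psi w) \/ (b = b' /\ z = pb b).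
Proof.
  intros G OK w b w' b' z A1 A2 hne [t [Ht Ez]] [t' [Ht' Ez']].
  change (z = lin (posW psi w) (pb b) t) in Ez. change (z = lin (posW psi w') (pb b') t') in Ez'.
  pose proof (EDGE _ _ _ _ _ G OK w b A1) as Q1.
  pose proof (EDGE _ _ _ _ _ G OK w' b' A2) as Q2.
  pose proof (posW_pos _ _ _ _ G w) as P1. pose proof (posW_pos _ _ _ _ G w') as P2.
  destruct (OK b) as [[v Hv] _]. destruct (OK b') as [[v' Hv'] _].
  destruct G as [Ho [TG ND]] eqn:EG.
  destruct (Rlt_or_le t 1) as [h1|h1]; destruct (Rlt_or_le t' 1) as [h2|h2].
  - assert (Z1 : pos3 (WA psi w) (WB psi w) (WC psi w) z) by (rewrite Ez; apply lin_pos2; auto; lra).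
    assert (Z2 : pos3 (WA psi w') (WB psi w') (WC psi w') z) by (rewrite Ez'; apply lin_pos2; auto; lra).
    assert (w = w') by (eapply L_disj; eauto). subst w'. left. split; auto.
    destruct (Req_dec t 0) as [e1|e1]. { rewrite Ez, e1, lin0; auto. }
    destruct (Req_dec t' 0) as [e2|e2]. { rewrite Ez', e2, lin0; auto. }
    exfalso. rewrite Ez in Ez'.
    destruct (Rtotal_order t t') as [c|[c|c]].
    + pose proof (lin_solve _ _ _ _ _ Ez' ltac:(lra)) as E2.
      apply (L_bound _ _ _ _ G w v'). rewrite <- Hv', E2. apply lin_pos2; auto. apply div_lt1; lra.
    + subst t'. pose proof (lin_solve _ _ _ _ _ Ez' ltac:(lra)) as E2.
      replace (t / t) with 1 in E2 by (field; lra). rewrite lin1 in E2.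
      apply hne. f_equal. eapply L_pbinj; eauto.
    + symmetry in Ez'. pose proof (lin_solve _ _ _ _ _ Ez' ltac:(lra)) as E2.
      apply (L_bound _ _ _ _ G w v). rewrite <- Hv, E2. apply lin_pos2; auto. apply div_lt1; lra.
  - exfalso. assert (t' = 1) by lra. subst t'. rewrite lin1 in Ez'.
    apply (L_bound _ _ _ _ G w v'). rewrite <- Hv', <- Ez', Ez. apply lin_pos2; auto; lra.
  - exfalso. assert (t = 1) by lra. subst t. rewrite lin1 in Ez.
    apply (L_bound _ _ _ _ G w' v). rewrite <- Hv, <- Ez, Ez'. apply lin_pos2; auto; lra.
  - assert (t = 1) by lra. assert (t' = 1) by lra. subst t t'. rewrite lin1 in Ez, Ez'.
    right. split; auto. eapply L_pbinj; eauto. congruence.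
Qed.

Theorem mainTheorem2 (d0 d1 d2 : Point) (psi pb : ZP -> Point) :
  0 < orient d0 d1 d2 ->
  is_Tgraph d0 d1 d2 psi ->
  is_nondegenerate psi ->
  black_pos_ok psi pb ->
  (forall w b, drawn_edge psi w b <-> adjH w b) /\ proper_embedding psi pb.
Proof.
  intros Ho TG ND OK.
  assert (G : Good d0 d1 d2 psi) by (split; [|split]; auto).
  split.
  - intros w b; split; [eapply DRAWN_ADJ; eauto | eapply ADJ_DRAWN; eauto].
  - split.
    + intros [w|b] [w'|b']; simpl; intro E.
      * f_equal. eapply L_disj; [exact G| apply (posW_pos _ _ _ _ G w)|]. rewrite E. apply (posW_pos _ _ _ _ G w').
      * exfalso. destruct (OK b') as [[v Hv] _]. apply (L_bound _ _ _ _ G w v).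
        rewrite <- Hv, <- E. apply (posW_pos _ _ _ _ G w).
      * exfalso. destruct (OK b) as [[v Hv] _]. apply (L_bound _ _ _ _ G w' v).
        rewrite <- Hv, E. apply (posW_pos _ _ _ _ G w').
      * f_equal. eapply L_pbinj; eauto.
    + intros. eapply CROSS; eauto.
Qed.
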